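(* For all integers $n \ge 3$ and $0 \le m \le n-1$ we have $\widehat{C}_{n,m} > 1$.
   Context: $\mathcal{K}_k^n = \{\prod_{s=1}^n [\frac{i_s-1}{k}, \frac{i_s}{k}] : i_s \in \{1,\dots,k\}\}$ (cubes dividing $I^n=[0,1]^n$); $\dim$ is topological dimension; a set $S\subset I^n$ connects some opposite faces of $I^n$ if it is connected and meets both $\{z_i=0\}$ and $\{z_i=1\}$ for some $i$; $\mathbb{Z}^{n-1}$ has the $\ell^\infty$ norm; $P\subset\mathbb{Z}^{n-1}$ is $1$-connected if any two points are joined by a finite chain in $P$ with consecutive $\ell^\infty$-distances $\le 1$. $\widehat{C}_{n,m}$ is the least constant $C>0$ such that: for every $k\in\mathbb{N}$ and every $F\colon\mathcal{K}_k^n\to\mathbb{Z}^{n-1}$ with $\|F(K_1)-F(K_2)\|_\infty\le 1$ whenever $\dim(K_1\cap K_2)\ge m$, there exist a $1$-connected $P\subset\mathbb{Z}^{n-1}$ with $|P|\le C$ and $\mathcal{S}\subset F^{-1}[P]$ with $\bigcup\mathcal{S}$ connecting some opposite faces of $I^n$. *)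

(* Defs.v *)
From HB Require Import structures.
From mathcomp Require Import all_boot all_order all_algebra.
From mathcomp Require Import all_classical all_reals all_analysis.
Set Implicit Arguments. Unset Strict Implicit. Unset Printing Implicit Defensive.
Import Order.TTheory GRing.Theory Num.Theory.
Import numFieldNormedType.Exports.
Local Open Scope ring_scope.
Local Open Scope classical_set_scope.

(* A cube of K_k^n is indexed by i : {ffun 'I_n -> 'I_k}; the paper's index
   i_s in {1,...,k} is (i s) + 1, so the cube is prod_s [i s / k, (i s + 1)/k]. *)
Definition cube (R : realType) (n k : nat) (i : {ffun 'I_n -> 'I_k})
  : set 'rV[R]_n :=
  [set x | forall s : 'I_n,
     ((i s)%:R / k%:R <= x ord0 s) /\ (x ord0 s <= (i s).+1%:R / k%:R)].

(* Topological dimension of the intersection of two cubes of K_k^n: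
   the intersection is empty (dimension -1) unless all indices differ by at
   most 1, in which case it is a product of intervals, nondegenerate exactly
   in the coordinates where the indices agree. *)
Definition cube_inter_dim (n k : nat) (i j : {ffun 'I_n -> 'I_k}) : int :=
  if [forall s, (`|(i s)%:Z - (j s)%:Z| <= 1)%R]
  then (#|[set s | i s == j s]|)%:Z else (-1)%R.

Definition linf_adj (d : nat) : rel {ffun 'I_d -> int} :=
  fun p q => [forall j, (`|p j - q j| <= 1)%R].

Definition one_connected (d : nat) (P : seq {ffun 'I_d -> int}) : Prop :=
  forall p q, p \in P -> q \in P ->
    exists s : seq {ffun 'I_d -> int},
      all (fun r => r \in P) s /\ path (@linf_adj d) p s /\ last p s = q.

Definition connects_opposite_faces (R : realType) (n : nat)
  (A : set 'rV[R]_n) : Prop :=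
  connected A /\ exists s : 'I_n,
    (exists x, A x /\ x ord0 s = 0) /\ (exists x, A x /\ x ord0 s = 1).

Definition Chat_admissible (R : realType) (n m : nat) (C : R) : Prop :=
  forall k : nat, (0 < k)%N ->
  forall F : {ffun 'I_n -> 'I_k} -> {ffun 'I_n.-1 -> int},
    (forall K1 K2, (m%:Z <= cube_inter_dim K1 K2)%R ->
       linf_adj (F K1) (F K2)) ->
    exists P : seq {ffun 'I_n.-1 -> int},
      [/\ uniq P, (size P)%:R <= C, one_connected P &
      exists S : {set {ffun 'I_n -> 'I_k}},
        (forall K, K \in S -> F K \in P) /\
        connects_opposite_faces
          [set x : 'rV[R]_n | exists2 K, K \in S & @cube R n k K x]].

(* Main.v *)
Require Import Defs.
From HB Require Import structures.
From mathcomp Require Import all_boot all_order all_algebra.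
From mathcomp Require Import all_classical all_reals all_analysis.
Import Order.TTheory GRing.Theory Num.Theory.
Import numFieldNormedType.Exports.
Local Open Scope ring_scope.

Section Tables.
Local Open Scope nat_scope.
Definition g0t := [:: 0; 0; 0; 0; 0; 0; 0; 1; 1; 0; 0; 1; 0; 0; 1; 0; 1; 1; 0; 0; 1; 1; 1; 1; 1; 1; 0].
Definition g1t := [:: 0; 0; 1; 0; 0; 1; 1; 0; 0; 0; 0; 0; 0; 0; 1; 1; 1; 0; 1; 1; 0; 0; 1; 1; 0; 1; 1].
Definition labt := [:: 0; 0; 1; 0; 0; 1; 2; 3; 3; 0; 0; 4; 0; 0; 5; 2; 5; 3; 6; 6; 4; 7; 5; 5; 7; 5; 8].
Definition cd a b c := 9 * a + 3 * b + c.
Definition near (a b : nat) := (a <= b.+1) && (b <= a.+1).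
Definition seq3 := iota 0 3.
Lemma P2all : all (fun a => all (fun b => all (fun c => all (fun a' => all (fun b' => all (fun c' =>
  [&& near a a', near b b', near c c', nth 0 g0t (cd a b c) == nth 0 g0t (cd a' b' c') &
      nth 0 g1t (cd a b c) == nth 0 g1t (cd a' b' c')] ==>
  (nth 0 labt (cd a b c) == nth 0 labt (cd a' b' c'))) seq3) seq3) seq3) seq3) seq3) seq3.
Proof. by []. Qed.
Lemma P3all : all (fun a => all (fun b => all (fun c => all (fun a' => all (fun b' => all (fun c' =>
  [&& nth 0 g0t (cd a b c) == nth 0 g0t (cd a' b' c'),
      nth 0 g1t (cd a b c) == nth 0 g1t (cd a' b' c') &
   nth 0 labt (cd a b c) == nth 0 labt (cd a' b' c')] ==>
  [&& ~~ ((a == 0) && (a' == 2)), ~~ ((b == 0) && (b' == 2)) & ~~ ((c == 0) && (c' == 2))]) seq3) seq3) seq3) seq3) seq3) seq3.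
Proof. by []. Qed.
Lemma in3 a : a < 3 -> a \in seq3.
Proof. by rewrite mem_iota. Qed.
Lemma P2 a b c a' b' c' : a < 3 -> b < 3 -> c < 3 -> a' < 3 -> b' < 3 -> c' < 3 ->
  near a a' -> near b b' -> near c c' ->
  nth 0 g0t (cd a b c) = nth 0 g0t (cd a' b' c') ->
  nth 0 g1t (cd a b c) = nth 0 g1t (cd a' b' c') ->
  nth 0 labt (cd a b c) = nth 0 labt (cd a' b' c').
Proof.
move=> ha hb hc ha' hb' hc' n1 n2 n3 e1 e2.
have := P2all; move/in3 in ha; move/in3 in hb; move/in3 in hc; move/in3 in ha'; move/in3 in hb'; move/in3 in hc'.
move=> /allP /(_ a ha) /allP /(_ b hb) /allP /(_ c hc) /allP /(_ a' ha') /allP /(_ b' hb') /allP /(_ c' hc').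
by rewrite n1 n2 n3 e1 e2 !eqxx /= => /eqP.
Qed.
Lemma P3 a b c a' b' c' : a < 3 -> b < 3 -> c < 3 -> a' < 3 -> b' < 3 -> c' < 3 ->
  nth 0 g0t (cd a b c) = nth 0 g0t (cd a' b' c') ->
  nth 0 g1t (cd a b c) = nth 0 g1t (cd a' b' c') ->
  nth 0 labt (cd a b c) = nth 0 labt (cd a' b' c') ->
  [/\ ~ (a = 0 /\ a' = 2), ~ (b = 0 /\ b' = 2) & ~ (c = 0 /\ c' = 2)].
Proof.
move=> ha hb hc ha' hb' hc' e1 e2 e3.
have := P3all; move/in3 in ha; move/in3 in hb; move/in3 in hc; move/in3 in ha'; move/in3 in hb'; move/in3 in hc'.
move=> /allP /(_ a ha) /allP /(_ b hb) /allP /(_ c hc) /allP /(_ a' ha') /allP /(_ b' hb') /allP /(_ c' hc').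
rewrite e1 e2 e3 !eqxx /= => /and3P [h1 h2 h3]; split.
- by move=> [x y]; move: h1; rewrite x y.
- by move=> [x y]; move: h2; rewrite x y.
- by move=> [x y]; move: h3; rewrite x y.
Qed.
Lemma g_le1 a : nth 0 g0t a <= 1 /\ nth 0 g1t a <= 1.
Proof.
have h0 : all (fun x => x <= 1) g0t by []. have h1 : all (fun x => x <= 1) g1t by [].
case: (ltnP a 27) => ha.
  by split; [apply: (allP h0); apply: mem_nth| apply: (allP h1); apply: mem_nth].
by rewrite !nth_default.
Qed.
End Tables.

Local Open Scope classical_set_scope.

Lemma cube_closed (R : realType) n k i : closed (@cube R n k i).
Proof.
rewrite (_ : cube i = \bigcap_(s in [set: 'I_n])
   (((fun x : 'rV[R]_n => x ord0 s) @^-1` [set y | (i s)%:R / k%:R <= y]) `&`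
    ((fun x : 'rV[R]_n => x ord0 s) @^-1` [set y | y <= (i s).+1%:R / k%:R]))).
  apply: closed_bigI => s _; apply: closedI; apply: preimage_closed.
  - by move=> x _; apply: coord_continuous.
  - exact: closed_ge.
  - by move=> x _; apply: coord_continuous.
  - exact: closed_le.
by rewrite predeqE => x; split => [H s _|H s]; [exact: H| exact: (H s I)].
Qed.

Lemma union_closed (R : realType) n k (X : {set {ffun 'I_n -> 'I_k}}) :
  closed [set x : 'rV[R]_n | exists2 K, K \in X & @cube R n k K x].
Proof.
rewrite (_ : [set x | _] = \bigcup_(K in [set K | K \in X]) cube K) //.
apply: closed_bigcup => [|K _]; last exact: cube_closed.
exact: finite_finset.
Qed.

Lemma div3_le (R : realType) (a b : nat) :
  (a%:R / 3%:R <= b%:R / 3%:R :> R) -> (a <= b)%N.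
Proof. by rewrite ler_pM2r ?invr_gt0 ?ltr0n // ler_nat. Qed.

Lemma cube_touch (R : realType) n (K K' : {ffun 'I_n -> 'I_3}) (x : 'rV[R]_n) :
  cube K x -> cube K' x -> forall s, near (K s) (K' s).
Proof.
move=> h1 h2 s; have [a1 b1] := h1 s; have [a2 b2] := h2 s.
by apply/andP; split; apply: (@div3_le R); [apply: le_trans b2|apply: le_trans b1].
Qed.

Lemma cube_face0 (R : realType) n (K : {ffun 'I_n -> 'I_3}) (x : 'rV[R]_n) s :
  cube K x -> x ord0 s = 0 -> K s = 0%N :> nat.
Proof.
move=> h e; have [a _] := h s; rewrite e in a.
apply/eqP; rewrite -leqn0; apply: (@div3_le R); by rewrite mul0r.
Qed.

Lemma cube_face1 (R : realType) n (K : {ffun 'I_n -> 'I_3}) (x : 'rV[R]_n) s :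
  cube K x -> x ord0 s = 1 -> K s = 2%N :> nat.
Proof.
move=> h e; have [_ b] := h s; rewrite e in b.
have : (3 <= (K s).+1)%N by apply: (@div3_le R); rewrite divff // pnatr_eq0.
by have := ltn_ord (K s); case: (nat_of_ord (K s)) => [|[|[|]]].
Qed.

Section Construction.
Variable n' : nat.
Definition code (K : {ffun 'I_n'.+3 -> 'I_3}) : nat :=
  cd (K (inord 0)) (K (inord 1)) (K (inord 2)).
Definition Fm (K : {ffun 'I_n'.+3 -> 'I_3}) : {ffun 'I_n'.+2 -> int} :=
  [ffun j : 'I_n'.+2 => if (j == 0 :> nat) then (nth 0%N g0t (code K))%:Z
     else if (j == 1 :> nat) then (nth 0%N g1t (code K))%:Z
     else (K (inord j.+1) : nat)%:Z].
Definition labF K := nth 0%N labt (code K).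

Lemma Fm_eq K K' : Fm K = Fm K' ->
  [/\ nth 0%N g0t (code K) = nth 0%N g0t (code K'),
      nth 0%N g1t (code K) = nth 0%N g1t (code K') &
      forall s : 'I_n'.+3, (3 <= s)%N -> K s = K' s].
Proof.
move=> e; split.
- by have := congr1 (fun f : {ffun 'I_n'.+2 -> int} => f (inord 0)) e; rewrite !ffunE inordK // => -[].
- by have := congr1 (fun f : {ffun 'I_n'.+2 -> int} => f (inord 1)) e; rewrite !ffunE inordK // => -[].
move=> s hs; have := congr1 (fun f : {ffun 'I_n'.+2 -> int} => f (inord s.-1)) e.
have hs1 : (s.-1 < n'.+2)%N.
  by have := ltn_ord s; case: (nat_of_ord s) hs => // k _ /=; rewrite ltnS.
rewrite !ffunE inordK //.
have -> : (s.-1 == 0%N) = false by case: (nat_of_ord s) hs => [|[|[|]]].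
have -> : (s.-1 == 1%N) = false by case: (nat_of_ord s) hs => [|[|[|]]].
have -> : (inord (s.-1).+1 : 'I_n'.+3) = s.
  by apply: val_inj; rewrite /= inordK prednK //; case: (nat_of_ord s) hs => [|[|[|]]].
by move=> [] /val_inj.
Qed.

Lemma ord3_0 : (0 < n'.+3)%N. Proof. by []. Qed.

Lemma lab_touch (R : realType) K K' (x : 'rV[R]_n'.+3) :
  cube K x -> cube K' x -> Fm K = Fm K' -> labF K = labF K'.
Proof.
move=> h1 h2 /Fm_eq [e1 e2 _]; have t := @cube_touch R _ K K' x h1 h2.
by apply: P2 => //; apply: t.
Qed.

Lemma Fm_adj (K1 K2 : {ffun 'I_n'.+3 -> 'I_3}) :
  (forall s, `|(K1 s)%:Z - (K2 s)%:Z| <= 1) -> linf_adj (Fm K1) (Fm K2).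
Proof.
move=> H; apply/forallP => j; rewrite !ffunE.
have d01 (a b : nat) : (a <= 1)%N -> (b <= 1)%N -> `|a%:Z - b%:Z| <= 1.
  by case: a => [|[|]] // _; case: b => [|[|]].
case: ifP => _; first by apply: d01; [case: (g_le1 (code K1))|case: (g_le1 (code K2))].
case: ifP => _; first by apply: d01; [case: (g_le1 (code K1))|case: (g_le1 (code K2))].
exact: H.
Qed.
End Construction.

Lemma seq_le1 (T : eqType) (P : seq T) a b :
  (size P <= 1)%N -> a \in P -> b \in P -> a = b.
Proof. by case: P => [|c [|]] // _; rewrite !inE => /eqP -> /eqP ->. Qed.

Theorem proposition5p3 (R : realType) (n m : nat) :
  (3 <= n)%N -> (m <= n - 1)%N ->
  forall C : R, 0 < C -> Chat_admissible n m C -> 1 < C.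
Proof.
move=> hn _ C C0 adm; rewrite ltNge; apply/negP => C1.
case: n hn adm => [|[|[|n']]] // _ adm.
have := adm 3%N erefl (@Fm n').
case.
  move=> K1 K2; rewrite /cube_inter_dim; case: ifP => [/forallP H _|_].
    exact: Fm_adj.
  by move=> h; have := le_lt_trans h (ltrN10 int).
move=> P [uP szP _ [S [SP [conn [s [[x0 [[K0 K0S cx0] x0s]] [x1 [[K1 K1S cx1] x1s]]]]]]]].
have szP1 : (size P <= 1)%N by rewrite -(ler_nat R); apply: le_trans szP C1.
have fib K : K \in S -> Fm n' K = Fm n' K0.
  by move=> KS; exact: (@seq_le1 _ P _ _ szP1 (SP K KS) (SP K0 K0S)).
pose T := [set K in S | labF n' K == labF n' K0].
pose A := [set x : 'rV[R]_n'.+3 | exists2 K, K \in S & cube K x].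
pose B := [set x : 'rV[R]_n'.+3 | exists2 K, K \in T & cube K x].
pose D := [set x : 'rV[R]_n'.+3 | exists2 K, K \in S :\: T & cube K x].
have BA : B = A.
  apply: conn.
  - by exists x0; exists K0 => //; rewrite inE K0S eqxx.
  - exists (~` D); first by apply: closed_openC; apply: union_closed.
    rewrite predeqE => x; split.
      move=> [K]; rewrite inE => /andP [KS /eqP lK] cK; split; first by exists K.
      move=> [K']; rewrite !inE => /andP [nT K'S] cK'; move: nT; rewrite K'S /=.
      rewrite -lK; have -> : labF n' K' = labF n' K; first last. by rewrite eqxx.
      by apply: (@lab_touch n' R _ _ _ cK' cK); rewrite !fib.
    move=> [[K KS cK] nD]; exists K => //; rewrite inE KS /=.
    apply/negPn/negP => nT; apply: nD; exists K => //.
    by rewrite !inE KS andbT nT.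
  - exists B; first exact: union_closed.
    rewrite predeqE => x; split.
      by move=> bx; split => //; case: bx => K; rewrite inE => /andP [KS _] cK; exists K.
    by case.
have : B x1 by rewrite BA; exists K1.
case=> K2; rewrite inE => /andP [K2S /eqP l2] cx2.
have e20 := fib K2 K2S.
have h0 := @cube_face0 R _ _ _ _ cx0 x0s.
have h2 := @cube_face1 R _ _ _ _ cx2 x1s.
have [e1 e2 e3] := @Fm_eq n' _ _ e20.
case: (ltnP s 3) => hs; last by move: (e3 s hs); move/(congr1 val) => /=; rewrite h0 h2.
have [q1 q2 q3] := P3 _ _ _ _ _ _ (ltn_ord (K0 (inord 0))) (ltn_ord (K0 (inord 1))) (ltn_ord (K0 (inord 2)))
  (ltn_ord (K2 (inord 0))) (ltn_ord (K2 (inord 1))) (ltn_ord (K2 (inord 2))) (esym e1) (esym e2) (esym l2).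
have es : forall j, (j < 3)%N -> (s : nat) = j -> s = inord j.
  by move=> j hj ej; apply: val_inj; rewrite /= inordK ?ej //; exact: (leq_trans hj).
have : [\/ s = inord 0, s = inord 1 | s = inord 2].
  move: hs (es 0%N) (es 1%N) (es 2%N); case: (nat_of_ord s) => [|[|[|]]] // _ a b c.
  - by apply: Or31; apply: a.
  - by apply: Or32; apply: b.
  - by apply: Or33; apply: c.
by case=> es'; rewrite es' in h0 h2; [apply: q1|apply: q2|apply: q3].
Qed.
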